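(* For all $x\ge y\ge 1$ and $n>x+y$, the maximum possible number of edges in any $(x,y)$ task-dependency graph of order $n$ produced by the $(x,y)$ edge-addition process is $\binom{n}{2}+1-\binom{x}{2}-\binom{y+1}{2}$.
   Context: A task-dependency graph is a finite directed acyclic graph (no loops, no multiple edges). A vertex is initial if it has in-degree $0$ and terminal if it has out-degree $0$ (an isolated vertex is both). An $(x,y)$ task-dependency graph has exactly $x$ initial and exactly $y$ terminal vertices. The $(x,y)$ edge-addition process on $n$ vertices: start with the empty graph on $\{1,\dots,n\}$ and repeatedly add, uniformly at random, an edge $(a,b)$ with $a<b$ not yet present; if an addition would cause fewer than $x$ initial vertices or fewer than $y$ terminal vertices, it is cancelled. The process halts if the graph after some edge addition is an $(x,y)$ task-dependency graph, or if no more edges can be added; the produced graph is the final graph (over all possible runs). *)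

(* Defs.v *)
From mathcomp Require Import all_boot.
Set Implicit Arguments. Unset Strict Implicit. Unset Printing Implicit Defensive.

(* A graph on the vertex set 'I_n (standing for {1,...,n}, order preserved)
   is a set of directed edges (a,b).  Graphs built by the process only
   contain edges with a < b, hence are acyclic without loops/multi-edges. *)
Definition graph (n : nat) := {set 'I_n * 'I_n}.

Definition is_initial n (E : graph n) (v : 'I_n) : bool :=
  [forall u : 'I_n, (u, v) \notin E].
Definition is_terminal n (E : graph n) (v : 'I_n) : bool :=
  [forall w : 'I_n, (v, w) \notin E].

Definition n_initial n (E : graph n) : nat := #|[set v | is_initial E v]|.
Definition n_terminal n (E : graph n) : nat := #|[set v | is_terminal E v]|.

Definition is_xy_graph n (x y : nat) (E : graph n) : bool :=
  (n_initial E == x) && (n_terminal E == y).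

Definition valid_addition n (x y : nat) (E : graph n) (a b : 'I_n) : bool :=
  [&& (a < b)%N, (a, b) \notin E,
      x <= n_initial ((a, b) |: E) & y <= n_terminal ((a, b) |: E)].

(* Graphs that can occur during some run of the (x,y) edge-addition
   process: the process has not halted yet (the current graph is not an
   (x,y) graph) when the next legal edge is added. *)
Inductive reachable n (x y : nat) : graph n -> Prop :=
| reach_empty : reachable x y set0
| reach_step (E : graph n) (a b : 'I_n) :
    reachable x y E -> ~~ is_xy_graph x y E -> valid_addition x y E a b ->
    reachable x y ((a, b) |: E).

Definition produced n (x y : nat) (E : graph n) : Prop :=
  reachable x y E /\
  (is_xy_graph x y E \/ forall a b : 'I_n, ~~ valid_addition x y E a b).

(* Main.v *)
Require Import Defs.
From mathcomp Require Import all_boot zify.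
Set Implicit Arguments. Unset Strict Implicit. Unset Printing Implicit Defensive.


Lemma bin2_double m : 'C(m, 2) * 2 = m * (m - 1).
Proof. elim: m => // m IH. rewrite binS bin1 mulnDl IH. nia. Qed.

Lemma card_lt_ord n c : c <= n -> #|[set v : 'I_n | (v < c)%N]| = c.
Proof.
move=> cn.
have -> : [set v : 'I_n | (v < c)%N] = [set widen_ord cn w | w in [set: 'I_c]].
  apply/setP => v; rewrite inE; apply/idP/imsetP.
  - move=> vc; exists (Ordinal vc); first by rewrite inE.
    by apply: val_inj.
  - by case=> w _ ->; rewrite /= ltn_ord.
rewrite card_imset ?cardsT ?card_ord //.
by move=> u w /(congr1 val) /= /val_inj.
Qed.

Lemma card_ge_ord n c : c <= n -> #|[set v : 'I_n | (c <= v)%N]| = n - c.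
Proof.
move=> cn.
have -> : [set v : 'I_n | (c <= v)%N] = ~: [set v : 'I_n | (v < c)%N].
  by apply/setP => v; rewrite !inE -leqNgt.
have := cardsC [set v : 'I_n | (v < c)%N]. rewrite card_lt_ord // card_ord. lia.
Qed.

Definition swp n (p : 'I_n * 'I_n) := (p.2, p.1).
Lemma swp_inj n : injective (@swp n).
Proof. by move=> [? ?] [? ?] [-> ->]. Qed.

Definition dg n (u : 'I_n) := (u, u).
Lemma dg_inj n : injective (@dg n).
Proof. by move=> ? ? []. Qed.

Lemma pairs_card n (L : {set 'I_n}) :
  #|[set p : 'I_n * 'I_n | [&& p.1 \in L, p.2 \in L & (p.1 < p.2)%N]]| = 'C(#|L|, 2).
Proof.
set P := [set p : 'I_n * 'I_n | _].
set Q := [set swp p | p in P].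
have dQ : #|Q| = #|P| by rewrite card_imset //; apply: swp_inj.
set D := [set dg u | u in L].
have dD : #|D| = #|L| by rewrite card_imset //; apply: dg_inj.
have PQ : P :&: Q = set0.
  apply/setP => [[u v]]; rewrite !inE; apply/negP => /andP[].
  move=> /and3P[_ _ uv] /imsetP[[u' v']].
  rewrite inE /= => /and3P[_ _ uv'] [e1 e2]; subst; move: uv uv' => /=; lia.
have U : P :|: Q = setX L L :\: D.
  apply/setP => [[u v]]; rewrite !inE /=; apply/idP/idP.
  - case/orP.
    + case/and3P => -> -> uv /=; rewrite andbT; apply/imsetP => [[w _ [e1 e2]]].
      subst; lia.
    + case/imsetP => [[u' v']]; rewrite inE /= => /and3P[H1 H2 uv'] [-> ->].
      rewrite H1 H2 !andbT; apply/imsetP => [[w _ [e1 e2]]]. subst; lia.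
  - case/andP => nD /andP[uL vL].
    have : u != v.
      by apply: contra nD => /eqP ->; apply/imsetP; exists v.
    rewrite neq_ltn => /orP[uv|vu].
    + by rewrite uL vL uv.
    + apply/orP; right; apply/imsetP; exists (v, u); last by [].
      by rewrite inE /= uL vL vu.
have sD : D \subset setX L L.
  by apply/subsetP => p /imsetP[u uL ->]; rewrite inE /= uL.
have := cardsU P Q. rewrite PQ cards0 U cardsD (setIidPr sD) cardsX dD dQ.
have := bin2_double #|L|. have -> : #|L| * #|L| - #|L| = #|L| * (#|L| - 1) by rewrite mulnBr muln1.
lia.
Qed.


Lemma core n (I T : {set 'I_n}) (G : {set 'I_n * 'I_n}) (a b : 'I_n) :
  (forall u v, (u,v) \in G -> (u \notin T /\ v \notin I) \/ (v \notin T /\ u \notin I)) ->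
  (forall u v, (u,v) \in G -> (v,u) \notin G) ->
  (forall u, (u,u) \notin G) ->
  a \notin T ->
  (forall w, w \in T -> w \notin I -> w != b -> ((a,w) \notin G) /\ ((w,a) \notin G)) ->
  #|G| * 2 + (#|T :\: I| - 1) * 2 + #|~: (I :|: T)| * #|~: (I :|: T)| + #|~:(I :|: T)|
    <= #|~: T| * #|~: I| * 2.
Proof.
move=> H1 H2 H3 aT H5.
set Q := [set swp p | p in G].
have dQ : #|Q| = #|G| by rewrite card_imset //; apply: swp_inj.
have GQ : G :&: Q = set0.
  apply/setP => [[u v]]; rewrite !inE; apply/negP => /andP[uvG].
  case/imsetP => [[u' v']] H [e1 e2]; subst.
  by move: (H2 _ _ H); rewrite uvG.
have dS : #|G :|: Q| = #|G| * 2 by rewrite cardsU GQ cards0 dQ; lia.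
set Tn := (T :\: I) :\ b.
have dTn : #|T :\: I| - 1 <= #|Tn| by rewrite /Tn (cardsD1 b (T :\: I)) leq_subLR; apply: leq_add; [by case: (_ \in _) | by []].
set X1 := [set (a, w) | w in Tn].
set X2 := [set (w, a) | w in Tn].
have dX1 : #|X1| = #|Tn| by rewrite card_imset // => ? ? [].
have dX2 : #|X2| = #|Tn| by rewrite card_imset // => ? ? [].
have X12 : X1 :&: X2 = set0.
  apply/setP => [[u v]]; rewrite !inE; apply/negP => /andP[].
  case/imsetP => w1 H1' [e1 e2]; case/imsetP => w2 H2' [e3 e4].
  have wa : w2 = a by rewrite -e3 e1.
  by move: H2'; rewrite wa !inE => /andP[_ /andP[_ wT]]; move: aT; rewrite wT.
set X := X1 :|: X2.
have dX : #|X| = #|Tn| * 2 by rewrite cardsU X12 cards0 dX1 dX2; lia.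
set M := ~: (I :|: T).
set D := [set dg u | u in M].
have dD : #|D| = #|M| by rewrite card_imset //; apply: dg_inj.
have DX : D :&: X = set0.
  apply/setP => [[u v]]; rewrite !inE; apply/negP => /andP[].
  case/imsetP => w _ [e1 e2]; subst.
  case/orP; case/imsetP => w' H [e1 e2]; subst;
  by move: H; rewrite !inE => /andP[_ /andP[_ wT]]; move: aT; rewrite wT.
set A := setX (~: T) (~: I).
set B := setX (~: I) (~: T).
have AB : A :&: B = setX M M.
  apply/setP => [[u v]]; rewrite !inE /=.
  by case: (u \in I); case: (u \in T); case: (v \in I); case: (v \in T).
have dAB : #|A :|: B| + #|M| * #|M| = #|~: T| * #|~: I| * 2.
  have := subset_leq_card (subsetIl A B).
  rewrite cardsU AB !cardsX [#|~: I| * _]mulnC; lia.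
have sZ : D :|: X \subset A :|: B.
  apply/subsetP => [[u v]]; rewrite !inE /=.
  case/orP; first by case/imsetP => w; rewrite !inE => /norP[wI wT] [-> ->]; rewrite wI wT.
  case/orP; case/imsetP => w; rewrite !inE => /andP[_ /andP[wI wT]] [-> ->];
    by rewrite wI wT aT.
have inGQ : forall u v, (u,v) \in G :|: Q -> (u,v) \in G \/ (v,u) \in G.
  move=> u v; case/setUP => H; first by left.
  right; case/imsetP: H => [[p1 p2]] Hp [-> ->]; exact: Hp.
have sS : G :|: Q \subset (A :|: B) :\: (D :|: X).
  apply/subsetP => [[u v]] Huv; rewrite in_setD; apply/andP; split.
  - have {Huv} HG := inGQ _ _ Huv.
    apply/negP; rewrite !inE /=; case/orP.
    + case/imsetP => w _ [e1 e2]; rewrite e1 e2 in HG.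
      by case: HG => H; move: (H3 w); rewrite H.
    + case/orP; case/imsetP => w Hw [e1 e2]; rewrite e1 e2 in HG;
      move: Hw; rewrite !inE => /andP[wb /andP[wI wT]];
      have [Hx Hy] := H5 w wT wI wb;
      case: HG => H; first [by move: Hx; rewrite H | by move: Hy; rewrite H].
  - have {Huv} := inGQ _ _ Huv.
    rewrite !inE /=; case=> /H1 [[-> ->]|[-> ->]]; by rewrite ?orbT.
have := subset_leq_card sS.
have dZ : #|D :|: X| = #|M| + #|Tn|*2 by rewrite cardsU DX cards0 dD dX; lia.
have := subset_leq_card sZ. rewrite dZ.
rewrite [#|(A :|: B) :\: _|]cardsD (setIidPr sZ) dS dZ.
move: dAB.
move: dTn. move: #|Tn| #|T :\: I| #|M| (#|~: T| * #|~: I|) #|G| #|A :|: B|. move=> t t0 m p g h1 h2 h3; move: h2 h3; move: (m*m) => mm; lia.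
Qed.

Lemma bin2_sq m : 'C(m, 2) * 2 + m = m * m.
Proof. elim: m => // m IH. rewrite binS bin1. lia. Qed.

Lemma arith n x y k t m g : k <= x -> k <= y -> x + y - k + m = n -> x + y < n -> t = y - k ->
  g*2 + (t-1)*2 + m*m + m <= (n-y)*(n-x)*2 -> g <= 'C(n,2)+1-'C(x,2)-'C(y.+1,2).
Proof.
move=> kx ky en lt et H.
have e1 := bin2_sq n; have e2 := bin2_sq x; have e3 := bin2_sq y.+1.
move: ('C(n,2)) ('C(x,2)) ('C(y.+1,2)) e1 e2 e3 => cn cx cy e1 e2 e3.
have [p ex] : exists p, x = k + p by exists (x - k); lia.
have [q ey] : exists q, y = k + q by exists (y - k); lia.
have en' : n = p + q + k + m by lia.
have hny : n - y = p + m by lia.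
have hnx : n - x = q + m by lia.
have hu : q <= (t - 1) + 1 by lia.
move: (t - 1) hu H => u hu. rewrite hny hnx => H.
have mk : k + 1 <= m by lia.
have hk : k*(k+1) <= k*m by apply: leq_mul.
have id : n*n + 2 + m*m + m + 2*q + x + k*k + k = 2*((p+m)*(q+m)) + 2 + x*x + y*y + y + n + 2*(k*m).
  rewrite en' ex ey. lia.
have e3' : cy * 2 = y*y + y by lia.
move: H hu hk id e1 e2 e3'; clear.
rewrite [k * (k+1)]mulnDr muln1.
move: ((p+m)*(q+m)) (n*n) (m*m) (x*x) (y*y) (k*k) (k*m) => PQ nn mm xx yy kk km.
lia.
Qed.


Lemma core_bound n (I T : {set 'I_n}) (G : {set 'I_n * 'I_n}) (a b : 'I_n) :
  (forall u v, (u,v) \in G -> (u \notin T /\ v \notin I) \/ (v \notin T /\ u \notin I)) ->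
  (forall u v, (u,v) \in G -> (v,u) \notin G) ->
  (forall u, (u,u) \notin G) ->
  a \notin T ->
  (forall w, w \in T -> w \notin I -> w != b -> ((a,w) \notin G) /\ ((w,a) \notin G)) ->
  #|I| + #|T| < n ->
  #|G| <= 'C(n,2) + 1 - 'C(#|I|,2) - 'C(#|T|.+1,2).
Proof.
move=> H1 H2 H3 H4 H5 lt.
have := core H1 H2 H3 H4 H5.
have e1 := cardsC T; have e2 := cardsC I; have e3 := cardsC (I :|: T).
have e4 := cardsU I T; have e5 := cardsD T I.
have e6 := subset_leq_card (subsetIl I T); have e7 := subset_leq_card (subsetIr I T).
rewrite card_ord in e1 e2 e3. rewrite setIC in e5.
have -> : #|~: T| = n - #|T| by lia.
have -> : #|~: I| = n - #|I| by lia.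
move=> H; apply: (@arith n #|I| #|T| #|I :&: T| #|T :\: I| #|~: (I :|: T)|) => //; try lia.
Qed.

Lemma reach_lt n x y (E : graph n) : reachable x y E ->
  forall u v, (u, v) \in E -> (u < v)%N.
Proof.
elim => [|E0 a b _ IH _ Hv] u v; first by rewrite inE.
rewrite in_setU1 => /orP[/eqP [-> ->]|/IH //].
by case/and4P: Hv.
Qed.

Lemma init_add n (E : graph n) a b v :
  is_initial ((a, b) |: E) v = (v != b) && is_initial E v.
Proof.
rewrite /is_initial; apply/forallP/andP.
- move=> H; split.
  + by apply/eqP => vb; subst; move: (H a); rewrite in_setU1 eqxx.
  + by apply/forallP => u; move: (H u); rewrite in_setU1 negb_or => /andP[].
- case=> vb /forallP H u; rewrite in_setU1 negb_or H andbT.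
  by apply: contra vb => /eqP [_ ->].
Qed.

Lemma term_add n (E : graph n) a b v :
  is_terminal ((a, b) |: E) v = (v != a) && is_terminal E v.
Proof.
rewrite /is_terminal; apply/forallP/andP.
- move=> H; split.
  + by apply/eqP => vb; subst; move: (H b); rewrite in_setU1 eqxx.
  + by apply/forallP => u; move: (H u); rewrite in_setU1 negb_or => /andP[].
- case=> vb /forallP H u; rewrite in_setU1 negb_or H andbT.
  by apply: contra vb => /eqP [-> _].
Qed.

Lemma upper n x y (E : graph n) : y <= x -> x + y < n -> reachable x y E ->
  is_xy_graph x y E -> #|E| <= 'C(n,2) + 1 - 'C(x,2) - 'C(y.+1,2).
Proof.
move=> yx lt HR Hxy.
have Hlt := reach_lt HR.
case: HR Hlt Hxy => [|E0 a b HR0 Hn Hv] Hlt Hxy.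
  move: Hxy; rewrite /is_xy_graph /n_initial.
  have -> : [set v | is_initial (set0 : graph n) v] = setT.
    by apply/setP => v; rewrite !inE; apply/forallP => u; rewrite inE.
  rewrite cardsT card_ord => /andP[/eqP nx _]; lia.
set G := (a, b) |: E0.
set I := [set v | is_initial G v].
set T := [set v | is_terminal G v].
have [dI dT] : #|I| = x /\ #|T| = y by case/andP: Hxy => /eqP e1 /eqP e2; split; [exact: e1 | exact: e2].
have H2 : forall u v, (u,v) \in G -> (v,u) \notin G.
  by move=> u v /Hlt uv; apply/negP => /Hlt; lia.
have H3 : forall u, (u,u) \notin G.
  by move=> u; apply/negP => /Hlt; lia.
have nT : forall u v, (u,v) \in G -> u \notin T.
  by move=> u v H; rewrite inE; apply/negP => /forallP /(_ v); rewrite H.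
have nI : forall u v, (u,v) \in G -> v \notin I.
  by move=> u v H; rewrite inE; apply/negP => /forallP /(_ u); rewrite H.
have abG : (a, b) \in G by rewrite in_setU1 eqxx.
have ltn' : #|I| + #|T| < n by rewrite dI dT.
case Ta: (is_terminal E0 a).
  have := @core_bound n I T G a b.
  rewrite dI dT in ltn' *; apply => //.
  - by move=> u v H; left; split; [apply: nT H | apply: nI H].
  - exact: nT abG.
  - move=> w wT _ wb; split.
    + rewrite in_setU1 negb_or xpair_eqE eqxx wb /=.
      by apply/negP => H; move/forallP: Ta => /(_ w); rewrite H.
    + by apply/negP => H; move: wT; rewrite inE => /forallP /(_ a); rewrite H.
case Ib: (is_initial E0 b).
  have ltn'' : #|T| + #|I| < n by rewrite addnC.
  have := @core_bound n T I G b a.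
  rewrite dI dT in ltn'' * => H.
  apply: leq_trans (H _ _ _ _ _ ltn'') _ => //.
  - by move=> u v Huv; right; split; [apply: nI Huv | apply: nT Huv].
  - exact: nI abG.
  - move=> w wI _ wa; split.
    + by apply/negP => H'; move: wI; rewrite inE => /forallP /(_ b); rewrite H'.
    + rewrite in_setU1 negb_or xpair_eqE eqxx andbT wa /=.
      by apply/negP => H'; move/forallP: Ib => /(_ w); rewrite H'.
  - rewrite !binS !bin1. have := bin2_sq x; have := bin2_sq y. lia.
exfalso; move/negP: Hn; apply.
have eI : [set v | is_initial E0 v] = I.
  apply/setP => v; rewrite !inE init_add.
  case vb: (v == b) => //=. by rewrite (eqP vb) Ib.
have eT : [set v | is_terminal E0 v] = T.
  apply/setP => v; rewrite !inE term_add.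
  case va: (v == a) => //=. by rewrite (eqP va) Ta.
by rewrite /is_xy_graph /n_initial /n_terminal eI eT dI dT !eqxx.
Qed.


Definition Full n x y : graph n :=
  [set p : 'I_n * 'I_n | [&& (p.1 < p.2)%N, (p.1 < n - y - 1)%N & (x <= p.2)%N]].

Lemma init_ge n x (S : graph n) :
  x <= n -> (forall u v, (u, v) \in S -> x <= v) -> x <= n_initial S.
Proof.
move=> xn H; rewrite /n_initial -{1}(card_lt_ord xn); apply: subset_leq_card.
apply/subsetP => v; rewrite !inE => vx; apply/forallP => u; apply/negP => /H; lia.
Qed.

Lemma term_ge n c (S : graph n) :
  c <= n -> (forall u v, (u, v) \in S -> u < c) -> n - c <= n_terminal S.
Proof.
move=> cn H; rewrite /n_terminal -(card_ge_ord cn); apply: subset_leq_card.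
apply/subsetP => v; rewrite !inE => vx; apply/forallP => u; apply/negP => /H; lia.
Qed.

Lemma reach_sub n x y : 1 <= y -> y <= x -> x + y < n ->
  forall S : graph n, S \subset Full n x y -> reachable x y S.
Proof.
move=> y1 yx lt.
have key : forall S : graph n, S \subset Full n x y -> x <= n_initial S /\ y.+1 <= n_terminal S.
  move=> S /subsetP sS; split.
  - apply: init_ge; first lia.
    by move=> u v /sS; rewrite inE => /and3P[].
  - have -> : y.+1 = n - (n - y - 1) by lia.
    apply: term_ge; first lia.
    by move=> u v /sS; rewrite inE => /and3P[].
suff : forall k (S : graph n), #|S| <= k -> S \subset Full n x y -> reachable x y S.
  by move=> H S; apply: (H #|S|).
elim => [|k IH] S.
  by rewrite leqn0 => /eqP /cards0_eq ->; constructor.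
move=> Sk sS.
have [->|/set0Pn [[u v] uvS]] := eqVneq S set0; first by constructor.
rewrite -(setD1K uvS).
have sS' : S :\ (u, v) \subset Full n x y by apply: subset_trans sS; apply: subsetDl.
apply: reach_step.
- apply: IH => //. move: Sk; rewrite (cardsD1 (u,v) S) uvS add1n ltnS. by move=> h; exact: h.
- rewrite /is_xy_graph negb_and; apply/orP; right.
  have [_ h] := key _ sS'. by rewrite neq_ltn h orbT.
- rewrite /valid_addition setD1K // !inE eqxx /=.
  have [h1 h2] := key _ sS.
  move/subsetP: sS => /(_ _ uvS); rewrite inE /= => /and3P[-> _ _].
  rewrite h1 /=. lia.
Qed.


Lemma full_count n x y : 1 <= y -> y <= x -> x + y < n ->
  'C(n, 2) - 'C(x, 2) - 'C(y.+1, 2) <= #|Full n x y|.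
Proof.
move=> y1 yx lt.
set P := fun L : {set 'I_n} =>
  [set p : 'I_n * 'I_n | [&& p.1 \in L, p.2 \in L & (p.1 < p.2)%N]].
have dU : #|P [set: 'I_n]| = 'C(n, 2) by rewrite /P pairs_card cardsT card_ord.
have dL : #|P [set v : 'I_n | (v < x)%N]| = 'C(x, 2) by rewrite /P pairs_card card_lt_ord //; lia.
have dH : #|P [set v : 'I_n | (n - y - 1 <= v)%N]| = 'C(y.+1, 2).
  rewrite /P pairs_card card_ge_ord; last lia. congr 'C(_, _); lia.
have sub : P [set: 'I_n] :\: (P [set v : 'I_n | (v < x)%N] :|: P [set v : 'I_n | (n - y - 1 <= v)%N])
   \subset Full n x y.
  apply/subsetP => [[u v]]; rewrite !inE /= => /andP[].
  rewrite !negb_or => /andP[h1 h2] uv.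
  move: h1 h2; rewrite uv !andbT => h1 h2.
  apply/and3P; split => //.
  - by move: h2; rewrite negb_and -!ltnNge => /orP[|] h; lia.
  - by move: h1; rewrite negb_and -!leqNgt => /orP[|] h; lia.
apply: leq_trans (subset_leq_card sub).
rewrite cardsD dU -dL -dH.
have := subset_leq_card (subsetIr (P [set: 'I_n]) (P [set v : 'I_n | (v < x)%N] :|: P [set v : 'I_n | (n - y - 1 <= v)%N])).
rewrite cardsU. lia.
Qed.


Theorem mainTheorem13 (x y n : nat) :
  1 <= y -> y <= x -> x + y < n ->
  (exists E : graph n, produced x y E /\ is_xy_graph x y E /\
     #|E| = 'C(n, 2) + 1 - 'C(x, 2) - 'C(y.+1, 2)) /\
  (forall E : graph n, produced x y E -> is_xy_graph x y E ->
     #|E| <= 'C(n, 2) + 1 - 'C(x, 2) - 'C(y.+1, 2)).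
Proof.
move=> y1 yx lt.
have UB : forall E : graph n, produced x y E -> is_xy_graph x y E ->
     #|E| <= 'C(n, 2) + 1 - 'C(x, 2) - 'C(y.+1, 2).
  by move=> E [HR _] Hxy; apply: upper.
split => //.
have Ha : n - y - 1 < n by lia.
have Hb : n - y < n by lia.
have H0 : 0 < n by lia.
have Hl : n - 1 < n by lia.
pose a := Ordinal Ha; pose b := Ordinal Hb; pose z := Ordinal H0; pose l := Ordinal Hl.
pose G := (a, b) |: Full n x y.
have inG : forall u v : 'I_n, (u, v) \in G ->
    ((u : nat) = n - y - 1 /\ (v : nat) = n - y) \/ [&& (u < v)%N, (u < n - y - 1)%N & (x <= v)%N].
  move=> u v; rewrite in_setU1 => /orP[/eqP [-> ->]|]; first by left.
  by rewrite inE /= => H; right.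
have nFull : ~~ is_xy_graph x y (Full n x y).
  rewrite /is_xy_graph negb_and; apply/orP; right.
  have h : n - (n - y - 1) <= n_terminal (Full n x y).
    apply: term_ge; first lia.
    by move=> u v; rewrite inE => /and3P[].
  rewrite neq_ltn; apply/orP; right; lia.
have xyG : is_xy_graph x y G.
  rewrite /is_xy_graph /n_initial /n_terminal.
  have -> : [set v | is_initial G v] = [set v : 'I_n | (v < x)%N].
    apply/setP => v; rewrite !inE; apply/forallP/idP.
    - move=> H; rewrite ltnNge; apply/negP => xv.
      move: (H z); rewrite in_setU1 negb_or inE /= => /andP[_].
      move=> /negP; apply; apply/and3P; split => /=; lia.
    - move=> vx u; apply/negP => /inG; case; lia.
  have -> : [set v | is_terminal G v] = [set v : 'I_n | (n - y <= v)%N].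
    apply/setP => v; rewrite !inE; apply/forallP/idP.
    - move=> H; rewrite leqNgt; apply/negP => vy.
      have [va|va] := eqVneq (v : nat) (n - y - 1).
      + move: (H b); rewrite in_setU1 negb_or xpair_eqE.
        have -> : v == a by apply/eqP/val_inj.
        by rewrite eqxx.
      + move: (H l); rewrite in_setU1 negb_or inE /= => /andP[_].
        move=> /negP; apply; apply/and3P; split => /=; lia.
    - move=> vy u; apply/negP => /inG; case; lia.
  rewrite card_lt_ord; last lia.
  rewrite card_ge_ord; last lia.
  apply/andP; split; apply/eqP => //; lia.
have RG : reachable x y G.
  apply: reach_step => //.
  - by apply: reach_sub => //.
  - rewrite /valid_addition /= inE /= negb_and.
    apply/and4P; split.
    + lia.
    + apply/orP; right; rewrite negb_and; apply/orP; left; lia.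
    + apply: init_ge; first lia. by move=> u v /inG; case; lia.
    + have h : n - (n - y) <= n_terminal G.
        by apply: term_ge; [lia | move=> u v H; case: (inG u v H); lia].
      have e : n - (n - y) = y by lia.
      by rewrite e in h.
exists G; split; first by split => //; left.
split => //.
apply/eqP; rewrite eqn_leq UB //; last by split => //; left.
rewrite /G cardsU1 inE /= ltnn andbF /=.
have := full_count y1 yx lt.
have e1 := bin2_sq n; have e2 := bin2_sq x; have e3 := bin2_sq y.+1.
have hN : (x + y.+1) * (x + y.+1) <= n * n by apply: leq_mul; lia.
have hN2 : 'C(x, 2) + 'C(y.+1, 2) <= 'C(n, 2) by nia.
move=> h; apply: (@leq_trans (1 + ('C(n,2) - 'C(x,2) - 'C(y.+1,2)))); first lia.
rewrite leq_add2l; exact: h.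
Qed.
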